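(* In the setting described in the context, with $\delta>0$, every interval in the barcode $\mathcal{B}(\ker f^\delta)$ is either of the form $[b,a+\delta)$ with $0<b\le a$ or equal to $[0,\delta)$. Moreover, an interval $[b,a+\delta)$ with $0<b\le a$ has multiplicity $\mathcal{M}^0_f(a,b)$ in $\mathcal{B}(\ker f^\delta)$, and $[0,\delta)$ has multiplicity $\dim\ker(h_0)$.
   Context: All vector spaces are over $\mathbb{Z}_2$. For a finite metric space $X$, $\mathrm{VR}_r(X)$ is the graph on $X$ with edges $[x,y]$ for $d^X(x,y)\le r$, and $\mathrm{PH}_0(X)$ is the persistence module $r\mapsto H_0(\mathrm{VR}_r(X))$ with structure maps $\rho_{rs}$ induced by inclusion; non-expansive maps induce persistence morphisms. Setting: $X\subseteq Z$, $X'\subseteq Z'$ finite metric spaces, $\varepsilon=d_{GH}((X,Z),(X',Z'))$. Fix a metric space $M$ and isometric embeddings $\gamma_Z,\gamma_{Z'}$ with $d^M_H(\gamma_Z(X),\gamma_{Z'}(X'))\le\varepsilon$ and $d^M_H(\gamma_Z(Z),\gamma_{Z'}(Z'))\le\varepsilon$, and maps $\alpha^Z\colon Z\to Z'$, $\alpha^{Z'}\colon Z'\to Z$ with $\alpha^Z(X)\subseteq X'$, $\alpha^{Z'}(X')\subseteq X$, moving points by at most $\varepsilon$ in $M$; $\alpha^X,\alpha^{X'}$ are their restrictions. $Y=\{(x,x')\in X\times X':\alpha^X(x)=x'\text{ or }\alpha^{X'}(x')=x\}$; $Y^\delta$ is $Y$ with distance $0$ between equal pairs and $\delta+d^X(x,y)$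 between distinct pairs $(x,x'),(y,y')$. The projection $\pi(x,x')=x$ is non-expansive $Y^\delta\to X$ and induces $h\colon W=\mathrm{PH}_0(Y^\delta)\to V=\mathrm{PH}_0(X)$, with degree-0 component $h_0$. $f\colon V\to U=\mathrm{PH}_0(Z)$ is induced by inclusion and $f^\delta=f\circ h$. With $\ker^+_b(U)=\ker\rho^U_{0b}$, $\ker^-_b(U)=\bigcup_{0\le r<b}\ker\rho^U_{0r}$ and $f_0$ the degree-0 component of $f$, $\mathcal{M}^0_f(a,b)=\dim\frac{f_0(\ker^+_a V)\cap \ker^+_b U}{f_0(\ker^-_a V)\cap\ker^+_b U+f_0(\ker^+_a V)\cap \ker^-_b U}$. The barcode of a pointwise finite-dimensional module is the multiset of intervals of its interval decomposition. *)

(* Defs.v *)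
From HB Require Import structures.
From mathcomp Require Import all_boot all_order all_algebra.
From mathcomp Require Import boolp classical_sets reals.
Set Implicit Arguments. Unset Strict Implicit. Unset Printing Implicit Defensive.
Import Order.TTheory GRing.Theory Num.Theory.
Local Open Scope ring_scope.
Local Open Scope classical_set_scope.

Section Metric.
Variable R : realType.

Definition is_metric (T : Type) (d : T -> T -> R) : Prop :=
  [/\ (forall x y, 0 <= d x y), (forall x y, d x y = 0 <-> x = y),
      (forall x y, d x y = d y x) & (forall x y z, d x z <= d x y + d y z)].

Definition isometric (T U : Type) (dT : T -> T -> R) (dU : U -> U -> R)
  (g : T -> U) : Prop := forall x y, dU (g x) (g y) = dT x y.

Definition hausdorff (M : Type) (d : M -> M -> R) (A B : set M) : R :=
  Num.max (sup [set inf [set d a b | b in B] | a in A])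
          (sup [set inf [set d a b | a in A] | b in B]).

Definition dGH_pair (TZ TZ' : Type) (dZ : TZ -> TZ -> R) (dZ' : TZ' -> TZ' -> R)
  (X : set TZ) (X' : set TZ') : R :=
  inf [set e | exists (M : Type) (dM : M -> M -> R) (gZ : TZ -> M) (gZ' : TZ' -> M),
        [/\ is_metric dM, isometric dZ dM gZ, isometric dZ' dM gZ' &
         e = Num.max (hausdorff dM (gZ @` X) (gZ' @` X'))
                     (hausdorff dM (gZ @` setT) (gZ' @` setT))]].

(** Chains over Z_2 on a finite vertex set, and H_0 of Vietoris-Rips graphs:
    H_0(VR_r(T)) = chain T / bdry d r. *)
Definition chain (T : finType) := 'rV['F_2]_#|T|.
Definition ch (T : finType) (x : T) : chain T := delta_mx 0 (enum_rank x).
Definition push (T U : finType) (g : T -> U) (v : chain T) : chain U :=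
  \sum_(x : T) v 0 (enum_rank x) *: ch (g x).
Definition bdry (T : finType) (d : T -> T -> R) (r : R) : {vspace chain T} :=
  <<[seq (ch p.1 + ch p.2)%R | p <- enum [pred p : T * T | (d p.1 p.2 <= r)%R]]>>%VS.
Definition spanS (T : finType) (P : chain T -> Prop) : {vspace chain T} :=
  <<[seq w <- enum (chain T) | `[< P w >] ]>>%VS.

(** A persistence submodule of PH_0(T) given at each
    r >= 0 by the preimage K r (a subspace of chains containing B r) of the
    subspace of H_0 = chain / B r, structure maps induced by identity on chains.
    An interval decomposition is an isomorphism with the direct sum of the
    interval modules Z_2[J i], i : I, given by the images [v i r] of the
    generators. *)
Definition is_interval (J : set R) : Prop :=
  [/\ (exists r, J r), (forall r, J r -> 0 <= r) &
      (forall r s t, J r -> J t -> r <= s -> s <= t -> J s)].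

Definition interval_decomp (T : finType) (K : R -> chain T -> Prop)
  (B : R -> {vspace chain T}) (I : Type) (J : I -> set R) (v : I -> R -> chain T) :
  Prop :=
  [/\ (forall i, is_interval (J i)) /\
      (forall i r, J i r -> K r (v i r)),
      (forall i r s, J i r -> J i s -> r <= s -> v i r - v i s \in B s),
      (forall i r s, J i r -> ~ J i s -> r <= s -> v i r \in B s),
      (forall r, 0 <= r -> forall n (f : 'I_n -> I), injective f ->
        (forall k, J (f k) r) -> \sum_(k < n) v (f k) r \in B r -> n = 0%N)
    & (forall r, 0 <= r -> forall w, K r w -> exists n (f : 'I_n -> I),
        (forall k, J (f k) r) /\ w - \sum_(k < n) v (f k) r \in B r)].

Definition has_card (I : Type) (P : I -> Prop) (m : nat) : Prop :=
  exists f : 'I_m -> I,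
    [/\ injective f, (forall k, P (f k)) & (forall i, P i -> exists k, f k = i)].

End Metric.

Definition pts (T : finType) (X : {set T}) := {x : T | x \in X}.
Definition dsub (R : realType) (T : finType) (d : T -> T -> R) (X : {set T})
  (x y : pts X) : R := d (val x) (val y).
Arguments dsub {R T} d X x y.

Section Ysp.
Variables (TZ TZ' : finType) (X : {set TZ}) (X' : {set TZ'}).
Variables (aZ : TZ -> TZ') (aZ' : TZ' -> TZ).

Definition Ypred (p : TZ * TZ') : bool :=
  [&& p.1 \in X, p.2 \in X' & (aZ p.1 == p.2) || (aZ' p.2 == p.1)].
Definition Ytype := {p : TZ * TZ' | Ypred p}.

Lemma Y_fst_in (p : Ytype) : (val p).1 \in X.
Proof. by case: p => -[x x'] /= /and3P []. Qed.

Definition piY (p : Ytype) : pts X := exist _ (val p).1 (Y_fst_in p).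

Definition dYdelta (R : realType) (dZ : TZ -> TZ -> R) (delta : R) (p q : Ytype) : R :=
  if p == q then 0 else delta + dZ (val p).1 (val q).1.
End Ysp.
Arguments piY {TZ TZ'} X X' aZ aZ' p.
Arguments dYdelta {TZ TZ'} X X' aZ aZ' {R} dZ delta p q.

Section Mult.
Variables (R : realType) (TZ : finType) (dZ : TZ -> TZ -> R) (X : {set TZ}).

(** M^0_f(a,b), computed with all subspaces of U_0 = chain Z / bdry dZ 0
    replaced by their preimages in chain Z (which all contain bdry dZ 0). *)
Definition kerp_img (a : R) : {vspace chain TZ} :=
  (spanS (fun w => exists v, v \in bdry (dsub dZ X) a /\ w = push val v)
     + bdry dZ 0)%VS.
Definition kerm_img (a : R) : {vspace chain TZ} :=
  (spanS (fun w => exists r, (0 <= r < a)%R /\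
                   exists v, v \in bdry (dsub dZ X) r /\ w = push val v)
     + bdry dZ 0)%VS.
Definition kerpU (b : R) : {vspace chain TZ} := bdry dZ b.
Definition kermU (b : R) : {vspace chain TZ} :=
  (spanS (fun w => exists r, (0 <= r < b)%R /\ w \in bdry dZ r) + bdry dZ 0)%VS.

Definition Mf0 (a b : R) : nat :=
  (\dim (kerp_img a :&: kerpU b)
   - \dim (kerm_img a :&: kerpU b + kerp_img a :&: kermU b))%N.
End Mult.

Section KerMod.
Variables (R : realType) (TZ TZ' : finType) (dZ : TZ -> TZ -> R).
Variables (X : {set TZ}) (X' : {set TZ'}) (aZ : TZ -> TZ') (aZ' : TZ' -> TZ).
Variable delta : R.

(** ker f^delta, f^delta = f o h : PH_0(Y^delta) -> PH_0(X) -> PH_0(Z):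
    at scale r, the preimage in chain Y of ker (f^delta)_r
    (to be taken modulo bdry (dYdelta dZ delta) r). *)
Definition ker_fdelta (r : R) (w : chain (Ytype X X' aZ aZ')) : Prop :=
  push val (push (piY X X' aZ aZ') w) \in bdry dZ r.

(** dim ker h_0, h_0 : H_0(VR_0(Y^delta)) -> H_0(VR_0(X)) *)
Definition dimker_h0 : nat :=
  (\dim (spanS (fun w : chain (Ytype X X' aZ aZ') =>
                  push (piY X X' aZ aZ') w \in bdry (dsub dZ X) 0))
   - \dim (bdry (dYdelta X X' aZ aZ' dZ delta) 0))%N.
End KerMod.
Arguments ker_fdelta {R TZ TZ'} dZ X X' aZ aZ' r w.
Arguments dimker_h0 {R TZ TZ'} dZ X X' aZ aZ' delta.
Arguments Mf0 {R TZ} dZ X a b.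

(* Main.v *)
Require Import Defs.
From HB Require Import structures.
From mathcomp Require Import all_boot all_order all_algebra.
From mathcomp Require Import boolp classical_sets reals.
Import Order.TTheory GRing.Theory Num.Theory.
Local Open Scope ring_scope.
Local Open Scope classical_set_scope.
Set Implicit Arguments. Unset Strict Implicit. Unset Printing Implicit Defensive.
Lemma F2_cases (a : 'F_2) : a = 0 \/ a = 1.
Proof. case: a => [[|[|//]]] Hi; [left|right]; exact: val_inj. Qed.
Lemma F2_addxx (a : 'F_2) : a + a = 0.
Proof. by case: (F2_cases a) => ->; rewrite ?addr0 //; apply: val_inj. Qed.
Lemma ch_addxx (T : finType) (x : chain T) : x + x = 0.
Proof. by apply/matrixP => i j; rewrite !mxE F2_addxx. Qed.
Lemma ch_subE (T : finType) (x y : chain T) : x - y = x + y.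
Proof. by apply/eqP; rewrite subr_eq -addrA ch_addxx addr0. Qed.
Lemma F2_10 : (1 : 'F_2) != 0. Proof. by []. Qed.
Section Fam.
Variables (I : Type) (V : zmodType).
Hypothesis Vxx : forall x : V, x + x = 0.

Lemma mask_fam n (f : 'I_n -> I) (Q : pred 'I_n) : injective f ->
  exists m (g : 'I_m -> I), [/\ injective g, (forall j, exists2 k, Q k & g j = f k),
    (forall k, Q k -> exists j, g j = f k) &
    forall h : I -> V, \sum_(k | Q k) h (f k) = \sum_j h (g j)].
Proof.
move=> finj; exists #|Q|, (fun j => f (enum_val j)); split.
- by move=> j1 j2 /finj /enum_val_inj.
- by move=> j; exists (enum_val j) => //; apply: enum_valP.
- move=> k Qk; exists (enum_rank_in Qk k); by rewrite enum_rankK_in.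
- by move=> h; rewrite -(big_enum_val (fun k => h (f k))).
Qed.

Lemma union_fam n1 n2 (g1 : 'I_n1 -> I) (g2 : 'I_n2 -> I) :
  injective g1 -> injective g2 -> (forall j k, g1 j <> g2 k) ->
  exists g : 'I_(n1 + n2) -> I, [/\ injective g,
    (forall j, (exists k, g j = g1 k) \/ (exists k, g j = g2 k)),
    (forall k, exists j, g j = g1 k), (forall k, exists j, g j = g2 k) &
    forall h : I -> V, \sum_j h (g j) = \sum_j h (g1 j) + \sum_j h (g2 j)].
Proof.
move=> i1 i2 dis.
pose g (j : 'I_(n1 + n2)) := match split j with inl a => g1 a | inr b => g2 b end.
exists g; split.
- move=> j1 j2; rewrite /g.
  case: splitP => a1 e1; case: splitP => a2 e2.
  + by move/i1 => ea; apply: val_inj; rewrite /= e1 e2 ea.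
  + by move/dis.
  + by move/esym/dis.
  + by move/i2 => ea; apply: val_inj; rewrite /= e1 e2 ea.
- by move=> j; rewrite /g; case: split => a; [left|right]; exists a.
- by move=> k; exists (lshift n2 k); rewrite /g (unsplitK (inl _ k)).
- by move=> k; exists (rshift n1 k); rewrite /g (unsplitK (inr _ k)).
- move=> h; rewrite big_split_ord /=; congr (_ + _); apply: eq_bigr => k _.
  + by rewrite /g (unsplitK (inl _ k)).
  + by rewrite /g (unsplitK (inr _ k)).
Qed.

Lemma norm_fam (h : I -> V) n (f : 'I_n -> I) :
  exists m (g : 'I_m -> I), [/\ injective g, (forall j, exists k, g j = f k) &
    \sum_k h (f k) = \sum_j h (g j)].
Proof.
elim: n f => [|n IH] f.
  exists 0%N, (fun j => f (cast_ord (erefl 0%N) j)); split.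
  - by case.
  - by case.
  - by rewrite !big_ord0.
have [m [g [gi gf gs]]] := IH (fun k => f (lift ord0 k)).
rewrite big_ord_recl gs.
have [[j0 ej0]|nj] := pselect (exists j, g j = f ord0).
  have [m' [g' [g'i g'f _ g's]]] := mask_fam (fun j => j != j0) gi.
  exists m', g'; split => //.
    by move=> j; have [k _ ->] := g'f j; have [k' ->] := gf k; exists (lift ord0 k').
  rewrite -g's (bigD1 j0) //= ej0 addrA Vxx add0r //.
have i1 : injective (fun _ : 'I_1 => f ord0) by move=> a b _; rewrite (ord1 a) (ord1 b).
have dis : forall (a : 'I_1) k, f ord0 <> g k by move=> a k ek; apply: nj; exists k.
have [g1 [g1i g1f _ _ g1s]] := union_fam i1 gi dis.
exists (1 + m)%N, g1; split => //.
  move=> j; case: (g1f j) => -[k ->]; first by exists ord0.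
  by have [k' ->] := gf k; exists (lift ord0 k').
by rewrite g1s big_ord1.
Qed.
End Fam.

Section Decomp.
Variables (R : realType) (T : finType) (K : R -> chain T -> Prop)
  (B : R -> {vspace chain T}) (I : Type) (J : I -> set R) (v : I -> R -> chain T).
Hypothesis hD : interval_decomp K B J v.
Hypothesis Bmono : forall r s, r <= s -> (B r <= B s)%VS.

Let Jint : forall i, is_interval (J i). Proof. by case: hD => -[]. Qed.
Let JK : forall i r, J i r -> K r (v i r). Proof. by case: hD => -[]. Qed.
Let D2 : forall i r s, J i r -> J i s -> r <= s -> v i r - v i s \in B s.
Proof. by case: hD. Qed.
Let D3 : forall i r s, J i r -> ~ J i s -> r <= s -> v i r \in B s.
Proof. by case: hD. Qed.
Let D4 : forall r, 0 <= r -> forall n (f : 'I_n -> I), injective f ->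
        (forall k, J (f k) r) -> \sum_(k < n) v (f k) r \in B r -> n = 0%N.
Proof. by case: hD. Qed.
Let D5 : forall r, 0 <= r -> forall w, K r w -> exists n (f : 'I_n -> I),
        (forall k, J (f k) r) /\ w - \sum_(k < n) v (f k) r \in B r.
Proof. by case: hD. Qed.

Lemma J_ge0 i r : J i r -> 0 <= r.
Proof. by case: (Jint i) => _ + _; apply. Qed.

Lemma J_conv i r s t : J i r -> J i t -> r <= s -> s <= t -> J i s.
Proof. by case: (Jint i) => _ _; apply. Qed.

Lemma D5inj r w : 0 <= r -> K r w -> exists n (f : 'I_n -> I),
  [/\ injective f, (forall k, J (f k) r) & w - \sum_k v (f k) r \in B r].
Proof.
move=> r0 Kw; have [n [f [fJ fB]]] := D5 r0 Kw.
have [m [g [gi gf gs]]] := norm_fam (@ch_addxx T) (fun i => v i r) f.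
exists m, g; split => //; last by rewrite -gs.
by move=> j; have [k ->] := gf j.
Qed.

Lemma decomp_push r s x : 0 <= r -> r <= s -> K r x -> exists m (g : 'I_m -> I),
  [/\ injective g, (forall k, J (g k) r /\ J (g k) s) & x - \sum_k v (g k) s \in B s].
Proof.
move=> r0 rs Kx; have [n [f [fi fJ fB]]] := D5inj r0 Kx.
have [m [g [gi gf gf' gs]]] := mask_fam (chain T) (fun k => `[< J (f k) s >]) fi.
exists m, g; split => //.
  by move=> j; have [k /asboolP Jk ->] := gf j; split.
rewrite -(gs (fun i => v i s)) big_mkcond /=.
have -> : x - \sum_k (if `[< J (f k) s >] then v (f k) s else 0) =
   (x - \sum_k v (f k) r) + \sum_k (v (f k) r - if `[< J (f k) s >] then v (f k) s else 0).
  by rewrite sumrB addrA subrK.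
apply: memvD; first exact: (subvP (Bmono rs)).
apply: memv_suml => k _; case: asboolP => Jks.
  exact: D2.
by rewrite subr0; apply: D3.
Qed.

Lemma alive_notB i r : J i r -> v i r \notin B r.
Proof.
move=> Jr; apply/negP => vB.
have := @D4 r (J_ge0 Jr) 1 (fun _ => i) _ _ _.
by move/(_ _ _ _)=> H; have := H (fun a b _ => etrans (ord1 a) (esym (ord1 b))) (fun=> Jr); rewrite big_ord1 => /(_ vB).
Qed.

Lemma single_inj (i : I) : injective (fun _ : 'I_1 => i).
Proof. by move=> a b _; rewrite (ord1 a) (ord1 b). Qed.

Lemma not_born r' r i : 0 <= r' -> r' <= r -> J i r -> ~ J i r' -> K r' (v i r) -> False.
Proof.
move=> r0 rr Jr nJ Kv.
have [m [g [gi gJ gB]]] := decomp_push r0 rr Kv.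
have dis : forall (a : 'I_1) k, i <> g k by move=> a k ei; apply: nJ; rewrite ei; case: (gJ k).
have [h [hi hor _ _ hs]] := union_fam (chain T) (@single_inj i) gi dis.
have hJ : forall k, J (h k) r.
  by move=> k; case: (hor k) => -[a ->]; [exact: Jr | case: (gJ a)].
have := @D4 r (le_trans r0 rr) _ h hi hJ.
by rewrite (hs (fun j => v j r)) big_ord1 -ch_subE => /(_ gB).
Qed.

Lemma zmod4 (W : zmodType) (xa xb A C : W) : (xa + xb - A) - xa - (xb - C) = C - A.
Proof. by rewrite -[xa + xb - A]addrA [xa + _]addrC addrK opprB addrC addrA addrAC addrK addrC. Qed.

Lemma count_bars (b c : R) (P Wa Wb : {vspace chain T}) :
  0 <= b -> b < c ->
  (forall x, x \in P <-> K b x /\ x \in B c) ->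
  (Wa <= P)%VS -> (Wb <= P)%VS ->
  (forall x, x \in Wa -> exists2 s, s < c & x \in B s) ->
  (forall s x, s < c -> K b x -> x \in B s -> x \in Wa) ->
  (forall x, x \in Wb -> x = 0 \/ exists r, [/\ 0 <= r, r < b & K r x]) ->
  (forall r x, 0 <= r -> r < b -> K r x -> x \in B c -> x \in Wb) ->
  (forall r x, 0 <= r -> x \in B r -> K r x) ->
  has_card (fun i => J i = [set r | b <= r < c]) (\dim P - \dim (Wa + Wb)).
Proof.
move=> b0 bc HP WaP WbP Ha Ha' Hb Hb' HBK.
set S := fun i => J i = [set r | b <= r < c].
have SJ : forall i s, S i -> (J i s <-> (b <= s < c)) by move=> i s ->.
have c0 : 0 <= c by apply: le_trans b0 (ltW bc).
have indep : forall m (g : 'I_m -> I), injective g -> (forall j, S (g j)) ->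
    \sum_j v (g j) b \in (Wa + Wb)%VS -> m = 0%N.
  move=> m g gi gS /memv_addP [xa xaW [xb xbW eq]].
  have [s sc xaB] := Ha _ xaW.
  pose s' := Num.max s b.
  have bs' : b <= s' by rewrite le_max lexx orbT.
  have s'c : s' < c by rewrite gt_max sc bc.
  have s'0 : 0 <= s' := le_trans b0 bs'.
  have xaB' : xa \in B s' by apply: (subvP (Bmono _)) xaB; rewrite le_max lexx.
  have gJs : forall j, J (g j) s' by move=> j; apply/(SJ _ _ (gS j)); rewrite bs'.
  have gJb : forall j, J (g j) b by move=> j; apply/(SJ _ _ (gS j)); rewrite lexx bc.
  have Amove : \sum_j v (g j) b - \sum_j v (g j) s' \in B s'.
    by rewrite -sumrB; apply: memv_suml => j _; apply: D2.
  case: (Hb _ xbW) => [xb0 | [r [r0 rb Kr]]].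
    apply: (D4 s'0 gi gJs).
    have -> : \sum_j v (g j) s' = \sum_j v (g j) b - (\sum_j v (g j) b - \sum_j v (g j) s').
      by rewrite opprB addrC subrK.
    by apply: memvB => //; rewrite eq xb0 addr0.
  have [m' [g' [g'i g'J g'B]]] := decomp_push r0 (ltW (lt_le_trans rb bs')) Kr.
  have dis : forall j k, g j <> g' k.
    move=> j k ejk; have := (g'J k).1; rewrite -ejk => /(SJ _ _ (gS j)) /andP [].
    by rewrite leNgt rb.
  have [h [hi hor _ _ hs]] := union_fam (chain T) gi g'i dis.
  have hJ : forall k, J (h k) s'.
    by move=> k; case: (hor k) => -[a ->]; [exact: gJs | case: (g'J a)].
  have := D4 s'0 hi hJ; rewrite (hs (fun i => v i s')).
  set A0 := \sum_j v (g j) b in eq Amove; set A := \sum_j v (g j) s' in Amove *.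
  set C := \sum_k v (g' k) s' in g'B *.
  have CA : C - A \in B s'.
    by rewrite -(zmod4 xa xb A C) -eq; apply: memvB => //; apply: memvB.
  rewrite ch_subE addrC in CA.
  by move/(_ CA)/eqP; rewrite addn_eq0 => /andP [/eqP].
have coef : forall m (g : 'I_m -> I), injective g -> (forall j, S (g j)) ->
    forall cf : 'I_m -> 'F_2, \sum_j cf j *: v (g j) b \in (Wa + Wb)%VS -> forall j, cf j = 0.
  move=> m g gi gS cf.
  have -> : \sum_j cf j *: v (g j) b = \sum_(j | cf j != 0) v (g j) b.
    rewrite [RHS]big_mkcond /=; apply: eq_bigr => j _.
    by case: (F2_cases (cf j)) => ->; rewrite ?scale0r ?scale1r.
  have [m' [g' [g'i g'f g'f' g's]]] := mask_fam (chain T) (fun j => cf j != 0) gi.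
  rewrite (g's (fun i => v i b)) => Hsum.
  have g'S : forall j, S (g' j) by move=> j; have [k _ ->] := g'f j.
  have m'0 := indep _ _ g'i g'S Hsum.
  move=> j; apply/eqP; apply/negPn/negP => /g'f' [j' _].
  by move: j'; rewrite m'0 => -[].
have inWa : forall x, x \in B b -> x \in (Wa + Wb)%VS.
  by move=> x xB; apply: (subvP (addvSl _ _)); apply: Ha' bc (HBK _ _ b0 xB) xB.
have span : forall w, w \in P -> exists m (g : 'I_m -> I),
    [/\ injective g, forall j, S (g j) & w - \sum_j v (g j) b \in (Wa + Wb)%VS].
  move=> w /HP [Kw wB].
  have [n [f [fi fJ fB]]] := D5inj b0 Kw.
  have noD : forall k, ~ J (f k) c.
    have [mD [gD [gDi gDf gDf' gDs]]] := mask_fam (chain T) (fun k => `[< J (f k) c >]) fi.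
    have Hs1 : \sum_(k | `[< J (f k) c >]) v (f k) b \in B c.
      have e := bigID (fun k => `[< J (f k) c >]) xpredT (fun k => v (f k) b).
      have -> : \sum_(k | `[< J (f k) c >]) v (f k) b =
          \sum_k v (f k) b - \sum_(k | ~~ `[< J (f k) c >]) v (f k) b by rewrite e addrK.
      apply: memvB.
        have -> : \sum_k v (f k) b = w - (w - \sum_k v (f k) b) by rewrite opprB addrC subrK.
        by apply: memvB => //; apply: (subvP (Bmono (ltW bc))).
      apply: memv_suml => k /asboolPn nJ; exact: D3 (fJ k) nJ (ltW bc).
    have Hs2 : \sum_(k | `[< J (f k) c >]) v (f k) c \in B c.
      have -> : \sum_(k | `[< J (f k) c >]) v (f k) c =
          \sum_(k | `[< J (f k) c >]) v (f k) b -
          \sum_(k | `[< J (f k) c >]) (v (f k) b - v (f k) c) by rewrite sumrB opprB addrC subrK.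
      apply: memvB => //; apply: memv_suml => k /asboolP Jc; exact: D2 (fJ k) Jc (ltW bc).
    rewrite (gDs (fun i => v i c)) in Hs2.
    have gDJ : forall j, J (gD j) c by move=> j; have [k /asboolP ? ->] := gDf j.
    have mD0 := D4 c0 gDi gDJ Hs2.
    move=> k Jc; have [j _] := gDf' k (asboolT Jc).
    by move: j; rewrite mD0 => -[].
  have [m [g [gi gf gf' gs]]] := mask_fam (chain T) (fun k => `[< S (f k) >]) fi.
  exists m, g; split => //.
    by move=> j; have [k /asboolP ? ->] := gf j.
  rewrite -(gs (fun i => v i b)).
  have e := bigID (fun k => `[< S (f k) >]) xpredT (fun k => v (f k) b).
  have -> : w - \sum_(k | `[< S (f k) >]) v (f k) b =
     (w - \sum_k v (f k) b) + \sum_(k | ~~ `[< S (f k) >]) v (f k) b.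
    by rewrite e opprD addrA subrK.
  apply: memvD; first exact: inWa.
  apply: memv_suml => k /asboolPn nS.
  have [[r [/andP [r0 rb] Jr]]|nr] := pselect (exists r, (0 <= r < b) /\ J (f k) r).
    have -> : v (f k) b = v (f k) r - (v (f k) r - v (f k) b) by rewrite opprB addrC subrK.
    apply: memvB; last by apply: inWa; apply: D2 => //; apply: ltW.
    apply: (subvP (addvSr _ _)); apply: (Hb' _ _ r0 rb (JK Jr)).
    by apply: D3 Jr (noD k) (ltW (lt_trans rb bc)).
  have [[s [/andP [bs sc] nJs]]|H] := pselect (exists s, (b <= s < c) /\ ~ J (f k) s); last first.
    exfalso; apply: nS; apply/seteqP; split => t /=.
      move=> Jt; have t0 := J_ge0 Jt.
      have bt : b <= t.
        rewrite leNgt; apply/negP => tb; apply: nr; exists t; split => //.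
        by rewrite t0 tb.
      rewrite bt /=; rewrite ltNge; apply/negP => ct.
      by apply: (noD k); apply: J_conv (fJ k) Jt (ltW bc) ct.
    move=> /andP [bt tc]; case: (pselect (J (f k) t)) => // nt.
    by exfalso; apply: H; exists t; split => //; rewrite bt tc.
  apply: (subvP (addvSl _ _)); apply: Ha' sc (JK (fJ k)) _.
  exact: D3 (fJ k) nJs bs.
set W := (Wa + Wb)%VS.
have WP : (W <= P)%VS by rewrite subv_add WaP WbP.
have bound : forall m (g : 'I_m -> I), injective g -> (forall j, S (g j)) ->
   \dim (<<[tuple v (g j) b | j < m]>> + W)%VS = (m + \dim W)%N /\
   (<<[tuple v (g j) b | j < m]>> + W <= P)%VS.
  move=> m g gi gS; set X := [tuple v (g j) b | j < m].
  have eX : forall i : 'I_m, X`_i = v (g i) b by move=> i; rewrite nth_mktuple.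
  have freeX : free X.
    apply/freeP => k Hk i; apply: (coef m g gi gS k) => //.
    have <- : \sum_i k i *: X`_i = \sum_j k j *: v (g j) b.
      by apply: eq_bigr => j _; rewrite eX.
    by rewrite Hk mem0v.
  have capX : (<<X>> :&: W = 0)%VS.
    apply/eqP; rewrite -subv0; apply/subvP => y /memv_capP [yX yW]; rewrite memv0.
    have ey := coord_span yX.
    have hc := coef m g gi gS (fun i => coord X i y).
    rewrite ey; apply/eqP; apply: big1 => i _; rewrite hc ?scale0r //.
    have <- : \sum_i coord X i y *: X`_i = \sum_j coord X j y *: v (g j) b.
      by apply: eq_bigr => j _; rewrite eX.
    by rewrite -ey.
  split.
    by rewrite dimv_disjoint_sum // (eqP freeX) size_tuple.
  rewrite subv_add WP andbT; apply/span_subvP => x xX.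
  have iX : (index x X < m)%N by rewrite -{2}(size_tuple X) index_mem.
  rewrite -(nth_index 0 xX) -[index x X]/(nat_of_ord (Ordinal iX)) eX.
  have Jb : J (g (Ordinal iX)) b by apply/(SJ _ _ (gS _)); rewrite lexx bc.
  apply/HP; split; first exact: JK.
  apply: D3 Jb _ (ltW bc); by move/(SJ _ _ (gS _)); rewrite ltxx andbF.
have dWP : (\dim W <= \dim P)%N by apply: dimvS.
pose Pm := fun m => `[< exists g : 'I_m -> I, injective g /\ forall j, S (g j) >].
have ex0 : exists m, Pm m.
  exists 0%N; apply/asboolP; exists (fun j : 'I_0 => match j with Ordinal _ h => False_rect _ (notF h) end).
  by split; case.
have ubP : forall m, Pm m -> (m <= \dim P - \dim W)%N.
  move=> m /asboolP [g [gi gS]]; have [e1 e2] := bound m g gi gS.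
  by rewrite -(leq_add2r (\dim W)) subnK // -e1 dimvS.
case: (ex_maxnP ex0 ubP) => m0 /asboolP [g0 [g0i g0S]] maxm0.
have surj : forall i, S i -> exists j, g0 j = i.
  move=> i Si; apply: contrapT => nex.
  have dis : forall j (a : 'I_1), g0 j <> i by move=> j a e; apply: nex; exists j.
  have [h [hi hor _ _ _]] := union_fam (chain T) g0i (@single_inj i) dis.
  have : Pm (m0 + 1)%N.
    apply/asboolP; exists h; split => // k; by case: (hor k) => -[a ->].
  by move/maxm0; rewrite addn1 ltnn.
have [e1 e2] := bound m0 g0 g0i g0S.
have PX : (P <= <<[tuple v (g0 j) b | j < m0]>> + W)%VS.
  apply/subvP => w wP; have [m [g [gi gS gB]]] := span w wP.
  have -> : w = (w - \sum_j v (g j) b) + \sum_j v (g j) b by rewrite subrK.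
  rewrite addrC; apply: memv_add => //.
  apply: memv_suml => j _; have [k ek] := surj _ (gS j).
  apply: memv_span; rewrite -ek -(nth_mktuple (fun j => v (g0 j) b) 0 k).
  by apply: mem_nth; rewrite size_tuple.
have eP : \dim P = (m0 + \dim W)%N.
  by rewrite -e1; apply/eqP; rewrite eqn_leq (dimvS PX) dimvS.
rewrite eP addnK; exists g0; split => //.
Qed.

Lemma bar_shape (delta : R) :
  0 < delta ->
  (forall r, 0 <= r -> exists2 eta, 0 < eta &
     forall s, r <= s -> s < r + eta -> forall x, K s x -> K r x) ->
  (forall r, 0 <= r -> exists2 eta, 0 < eta &
     forall s, r <= s -> s < r + eta -> (B s <= B r)%VS) ->
  (exists D, forall r, D <= r -> forall x, K r x -> x \in B r) ->
  (forall r x, r < delta -> x \in B r -> x = 0) ->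
  (forall a x, 0 <= a -> x \in B (a + delta) -> K a x) ->
  (forall x, K 0 x -> x \in B delta) ->
  forall i, (exists a b, 0 < b <= a /\ J i = [set r | b <= r < a + delta])
            \/ J i = [set r | 0 <= r < delta].
Proof.
move=> d0 Kr Br [D HD] Bs BK K0 i.
have [r0 Jr0] : exists r, J i r by case: (Jint i).
have ubJ : forall r, J i r -> r < D.
  move=> r Jr; rewrite ltNge; apply/negP => Dr.
  by have := alive_notB Jr; rewrite (HD r Dr _ (JK Jr)).
have Jne : J i !=set0 by exists r0.
have hsup : has_sup (J i) by split => //; exists D => r /ubJ /ltW.
have hinf : has_inf (J i) by split => //; exists 0 => r /J_ge0.
set b := inf (J i); set c := sup (J i).
have b0 : 0 <= b by apply: lb_le_inf => // r /J_ge0.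
have bJ : J i b.
  apply: contrapT => nb.
  have [eta eta0 Heta] := Kr b b0.
  have [r Jr rlt] := inf_adherent eta0 hinf.
  have br : b <= r := ge_inf hinf.2 Jr.
  exact: (not_born b0 br Jr nb (Heta _ br rlt _ (JK Jr))).
have cJ : ~ J i c.
  move=> Jc; have c0 := J_ge0 Jc.
  have [eta eta0 Heta] := Br c c0.
  pose s := c + eta / 2.
  have cs : c < s by rewrite ltrDl divr_gt0.
  have sl : s < c + eta by rewrite ltrD2l ltr_pdivrMr // ltr_pMr // ltr1n.
  have nJs : ~ J i s.
    by move=> Js; have := sup_upper_bound hsup Js; rewrite leNgt cs.
  have := D3 Jc nJs (ltW cs) => /(subvP (Heta _ (ltW cs) sl)).
  by apply/negP; apply: alive_notB.
have bc : b < c.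
  rewrite lt_neqAle (sup_upper_bound hsup bJ) andbT.
  by apply/eqP => ebc; apply: cJ; rewrite -ebc.
have eqJ : J i = [set r | b <= r < c].
  apply/seteqP; split => t /=.
    move=> Jt; rewrite (ge_inf hinf.2 Jt) /= lt_neqAle (sup_upper_bound hsup Jt) andbT.
    by apply/eqP => etc; apply: cJ; rewrite -etc.
  move=> /andP [bt tc].
  have ct : 0 < c - t by rewrite subr_gt0.
  have [e Je elt] := sup_adherent ct hsup.
  apply: J_conv bJ Je bt (ltW _); by rewrite opprB addrC subrK in elt.
have vB : v i b \in B c := D3 bJ cJ (ltW bc).
have dc : delta <= c.
  rewrite leNgt; apply/negP => cd.
  by have := alive_notB bJ; rewrite (Bs _ _ cd vB) mem0v.
pose a := c - delta.
have a0 : 0 <= a by rewrite subr_ge0.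
have ca : c = a + delta by rewrite subrK.
have ba : b <= a.
  rewrite leNgt; apply/negP => ab.
  have Ka : K a (v i b) by apply: BK a0 _; rewrite -ca.
  have nJa : ~ J i a by move=> Ja; have := ge_inf hinf.2 Ja; rewrite leNgt ab.
  exact: (not_born a0 (ltW ab) bJ nJa Ka).
case: (eqVneq b 0) => [b_0 | bn0].
  right; rewrite eqJ b_0.
  have cd : c = delta.
    apply/eqP; rewrite eq_le dc andbT leNgt; apply/negP => dlt.
    have Jd : J i delta by rewrite eqJ /= b_0 (ltW d0) dlt.
    have J0 : J i 0 by rewrite -b_0.
    have v0 : v i 0 \in B delta by apply: K0; apply: JK.
    have := D2 J0 Jd (ltW d0) => /(memvB v0); rewrite opprB addrC subrK.
    by apply/negP; apply: alive_notB.
  by rewrite cd.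
left; exists a, b; split; last by rewrite eqJ ca.
by rewrite lt_neqAle eq_sym bn0 b0 ba.
Qed.
End Decomp.

Lemma min_sel (Y : Type) (P : Y -> Prop) (m : Y -> nat) :
  (exists x, P x) -> exists x, P x /\ forall y, P y -> (m x <= m y)%N.
Proof.
move=> [x0 Px0].
have ex : exists n, `[< exists x, P x /\ m x = n >] by exists (m x0); apply/asboolP; exists x0.
case: (ex_minnP ex) => n /asboolP [x [Px <-]] minn.
by exists x; split => // y Py; apply: minn; apply/asboolP; exists y.
Qed.

Section TwoChain.
Variables (F : fieldType) (vT : vectType F) (X : Type) (A B : X -> {vspace vT}).
Hypothesis Ach : forall o1 o2, (A o1 <= A o2)%VS \/ (A o2 <= A o1)%VS.
Hypothesis Bch : forall o1 o2, (B o1 <= B o2)%VS \/ (B o2 <= B o1)%VS.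
Hypothesis Afull : exists o, A o = fullv.
Hypothesis Bfull : exists o, B o = fullv.

Definition adapted (C : X -> {vspace vT}) (e : seq vT) :=
  forall o, (C o :&: <<e>> <= <<[seq y <- e | y \in C o]>>)%VS.

Lemma chain_cmp (C : X -> {vspace vT}) (Cch : forall o1 o2, (C o1 <= C o2)%VS \/ (C o2 <= C o1)%VS)
   (U : {vspace vT}) o0 :
  (forall o, ~~ (C o <= U)%VS -> (\dim (C o0) <= \dim (C o))%N) ->
  forall o, (C o0 <= C o)%VS \/ (C o <= U)%VS.
Proof.
move=> mn o; case: (Cch o0 o) => [->|oo0]; first by left.
case: (boolP (C o <= U)%VS) => [|nU]; first by right.
left; have := mn _ nU; rewrite (geq_leqif (dimv_leqif_eq oo0)) => /eqP <-.
exact: subvv.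
Qed.

Lemma chain_cmpQ (C : X -> {vspace vT}) (Cch : forall o1 o2, (C o1 <= C o2)%VS \/ (C o2 <= C o1)%VS)
   (Q : {vspace vT} -> bool) o0 :
  (forall o, ~~ Q (C o) -> (\dim (C o0) <= \dim (C o))%N) ->
  forall o, (C o0 <= C o)%VS \/ Q (C o).
Proof.
move=> mn o; case: (Cch o0 o) => [->|oo0]; first by left.
case: (boolP (Q (C o))) => [|nU]; first by right.
left; have := mn _ nU; rewrite (geq_leqif (dimv_leqif_eq oo0)) => /eqP <-.
exact: subvv.
Qed.

Lemma max_sel (Y : Type) (P : Y -> Prop) (m : Y -> nat) N :
  (forall x, (m x <= N)%N) -> (exists x, P x) -> exists x, P x /\ forall y, P y -> (m y <= m x)%N.
Proof.
move=> mN ex; have [x [Px mn]] := @min_sel _ P (fun y => N - m y)%N ex.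
exists x; split => // y Py; rewrite leqNgt; apply/negP => lt.
have := ltn_sub2l (leq_trans lt (mN y)) lt; rewrite ltnNge => /negP; apply; exact: mn.
Qed.

Lemma step (e : seq vT) : free e -> adapted A e -> adapted B e ->
  (forall o, ~~ (A o <= <<e>>)%VS -> (<<e>> <= A o)%VS) -> (<<e>> != fullv)%VS ->
  exists x, [/\ free (x :: e), adapted A (x :: e), adapted B (x :: e) &
     forall o, ~~ (A o <= <<x :: e>>)%VS -> (<<x :: e>> <= A o)%VS].
Proof.
move=> fe adA adB invA nfull; set U := <<e>>%VS.
have [oA [nAU minA]] : exists oA, ~~ (A oA <= U)%VS /\
    forall o, ~~ (A o <= U)%VS -> (\dim (A oA) <= \dim (A o))%N.
  apply: (@min_sel _ (fun o => ~~ (A o <= U)%VS) (fun o => \dim (A o))).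
  case: Afull => o Ao; exists o; rewrite Ao; apply/negP => fU; apply/negP: nfull.
  by rewrite negbK eqEsubv subvf fU.
have Acmp := @chain_cmpQ A Ach (fun W => (W <= U)%VS) _ minA.
have UA : (U <= A oA)%VS := invA _ nAU.
have [oB [nBU minB]] : exists oB, ~~ (B oB :&: A oA <= U)%VS /\
    forall o, ~~ (B o :&: A oA <= U)%VS -> (\dim (B oB) <= \dim (B o))%N.
  apply: (@min_sel _ (fun o => ~~ (B o :&: A oA <= U)%VS) (fun o => \dim (B o))).
  by case: Bfull => o Bo; exists o; rewrite Bo capfv.
have Bcmp := @chain_cmpQ B Bch (fun W => (W :&: A oA <= U)%VS) _ minB.
have [L [Lcap Lcmp]] : exists L : {vspace vT}, (L :&: A oA <= U)%VS /\
    forall o, (B oB <= B o)%VS \/ (B o <= L)%VS.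
  case: (pselect (exists o, ~~ (B oB <= B o)%VS)) => [exo|nexo]; last first.
    exists 0%VS; split; first by rewrite cap0v sub0v.
    move=> o; left; case: (boolP (B oB <= B o)%VS) => // H; exfalso; apply: nexo; exists o.
    exact: H.
  have [oL [nBL maxL]] := @max_sel _ (fun o => ~~ (B oB <= B o)%VS) (fun o => \dim (B o)) _
    (fun o => dimvS (subvf (B o))) exo.
  have LB : (B oL <= B oB)%VS by case: (Bch oB oL) => // H; rewrite H in nBL.
  exists (B oL); split.
    case: (Bcmp oL) => // H; by rewrite H in nBL.
  move=> o; case: (boolP (B oB <= B o)%VS) => H; first by left.
  right; case: (Bch oL o) => // oLo.
  have := maxL _ H; rewrite (geq_leqif (dimv_leqif_eq oLo)) => /eqP ->.
  exact: subvv.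
have [x xAB xnUL] : exists2 x, x \in (A oA :&: B oB)%VS & x \notin (U + L)%VS.
  apply/subvPn/negP => sub.
  have [z /memv_capP [zB zA] znU] := subvPn nBU.
  have /memv_addP [u uU [y yL ezy]] : z \in (U + L)%VS by apply: (subvP sub); rewrite memv_cap zA zB.
  have yA : y \in A oA.
    have -> : y = z - u by rewrite ezy [u + y]addrC addrK.
    by apply: memvB => //; apply: (subvP UA).
  have : y \in U by apply: (subvP Lcap); rewrite memv_cap yL yA.
  by move=> yU; apply: (negP znU); rewrite ezy; apply: memvD.
have /memv_capP [xA xB] := xAB.
have xnU : x \notin U by apply: contra xnUL; apply: (subvP (addvSl _ _)).
exists x; split.
- by rewrite free_cons fe andbT.
- move=> o; apply/subvP => y /memv_capP [yA]; rewrite span_cons.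
  move=> /memv_addP [kx /vlineP [k ekx] [u uU ey]]; subst kx y.
  case xAo: (x \in A o).
    rewrite /= xAo span_cons; apply: memv_add; first by apply: memvZ; apply: memv_line.
    apply: (subvP (adA o)); rewrite memv_cap uU andbT.
    have -> : u = k *: x + u - k *: x by rewrite [k *: x + u]addrC addrK.
    by apply: memvB => //; apply: memvZ.
  rewrite /= xAo; apply: (subvP (adA o)); rewrite memv_cap yA /=.
  case: (Acmp o) => [H|H]; first by rewrite (subvP H) in xAo.
  exact: (subvP H).
- move=> o; apply/subvP => y /memv_capP [yB]; rewrite span_cons.
  move=> /memv_addP [kx /vlineP [k ekx] [u uU ey]]; subst kx y.
  case xBo: (x \in B o).
    rewrite /= xBo span_cons; apply: memv_add; first by apply: memvZ; apply: memv_line.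
    apply: (subvP (adB o)); rewrite memv_cap uU andbT.
    have -> : u = k *: x + u - k *: x by rewrite [k *: x + u]addrC addrK.
    by apply: memvB => //; apply: memvZ.
  rewrite /= xBo; case: (Lcmp o) => [H|H]; first by rewrite (subvP H) in xBo.
  case: (eqVneq k 0) => [k0|kn0].
    rewrite k0 scale0r add0r; apply: (subvP (adB o)); rewrite memv_cap uU andbT.
    by move: yB; rewrite k0 scale0r add0r.
  exfalso; apply: (negP xnUL).
  have -> : x = k^-1 *: (k *: x + u - u) by rewrite addrK scalerA mulVf // scale1r.
  apply: memvZ; apply: memvB; last by apply: (subvP (addvSl _ _)).
  by apply: (subvP (addvSr _ _)); apply: (subvP H).
- move=> o nAo.
  have nAoU : ~~ (A o <= U)%VS.
    by apply: contra nAo => AU; apply: subv_trans AU _; rewrite span_cons addvSr.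
  rewrite span_cons subv_add (invA _ nAoU) andbT -memvE.
  case: (Acmp o) => [H|H]; first exact: (subvP H).
  by rewrite (subv_trans H) ?span_cons ?addvSr in nAo.
Qed.

Lemma two_chain : exists e : seq vT, [/\ free e, <<e>>%VS = fullv, adapted A e & adapted B e].
Proof.
suff H : forall n (e : seq vT), (\dim (fullv : {vspace vT}) - \dim <<e>> <= n)%N ->
    free e -> adapted A e -> adapted B e ->
    (forall o, ~~ (A o <= <<e>>)%VS -> (<<e>> <= A o)%VS) ->
    exists e', [/\ free e', <<e'>>%VS = fullv, adapted A e' & adapted B e'].
  apply: (H (\dim (fullv : {vspace vT})) [::]).
  - exact: leq_subr.
  - by rewrite /free span_nil dimv0.
  - by move=> o; rewrite span_nil capv0 sub0v.
  - by move=> o; rewrite span_nil capv0 sub0v.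
  - by move=> o _; rewrite span_nil sub0v.
elim=> [|n IH] e de fe aA aB iA.
  exists e; split => //; apply/eqP; rewrite eqEsubv subvf /=.
  rewrite -(geq_leqif (dimv_leqif_sup (subvf <<e>>%VS))).
  by rewrite -subn_eq0 -leqn0.
case: (eqVneq <<e>>%VS fullv) => [ef|nf]; first by exists e.
have [x [fx aAx aBx iAx]] := step fe aA aB iA nf.
apply: (IH (x :: e)) => //.
rewrite (eqP fx) /=; move: de; rewrite (eqP fe).
by rewrite subnS -subn1 leq_subLR => h; rewrite -subnDA leq_subLR -addnA add1n.
Qed.
End TwoChain.

Lemma coord_filter (F : fieldType) (vT : vectType F) (e : seq vT) (P : pred vT)
  (j : 'I_(size e)) y :
  free e -> y \in <<[seq x <- e | P x]>>%VS -> ~~ P (e`_j) -> coord (in_tuple e) j y = 0.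
Proof.
move=> fe yS nP.
set fl := [seq x <- e | P x] in yS.
rewrite (coord_span (X := in_tuple fl) yS) linear_sum big1 // => i _.
rewrite linearZ /=.
have : fl`_i \in fl by apply: mem_nth; exact: ltn_ord.
rewrite mem_filter => /andP [Px xe].
set x := fl`_i in Px xe *.
have ix : (index x e < size e)%N by rewrite index_mem.
rewrite -(nth_index 0 xe) -[index x e]/(nat_of_ord (Ordinal ix)).
rewrite (@coord_free _ _ _ (in_tuple e) (Ordinal ix) j fe).
case: eqP => [eij|_]; last by rewrite /= ?scaler0 ?mulr0.
by move: nP; rewrite -eij /= nth_index // Px.
Qed.

Lemma sval_inj (A : Type) (P : A -> Prop) : injective (@proj1_sig A P).
Proof.
by case=> a pa [b pb] /= eab; subst b; congr exist; exact: Prop_irrelevance.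
Qed.

Lemma exists_decomp (R : realType) (T : finType) (Kv B : R -> {vspace chain T}) :
  (forall r s, r <= s -> (Kv r <= Kv s)%VS) -> (forall r s, r <= s -> (B r <= B s)%VS) ->
  exists (I : Type) (J : I -> set R) (v : I -> R -> chain T),
    interval_decomp (fun r w => w \in Kv r) B J v.
Proof.
move=> Kmono Bmono.
pose A' := fun o : option R => if o is Some r then Kv r else fullv.
pose B' := fun o : option R => if o is Some r then B r else fullv.
have Ach : forall o1 o2, (A' o1 <= A' o2)%VS \/ (A' o2 <= A' o1)%VS.
  case=> [r1|] [r2|] /=; try by [left; apply: subvf | right; apply: subvf].
  by case: (leP r1 r2) => h; [left; apply: Kmono | right; apply: Kmono; apply: ltW].
have Bch : forall o1 o2, (B' o1 <= B' o2)%VS \/ (B' o2 <= B' o1)%VS.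
  case=> [r1|] [r2|] /=; try by [left; apply: subvf | right; apply: subvf].
  by case: (leP r1 r2) => h; [left; apply: Bmono | right; apply: Bmono; apply: ltW].
have [e [fe ef aA aB]] := two_chain Ach Bch (ex_intro _ None erefl) (ex_intro _ None erefl).
have aK : forall r, (Kv r <= <<[seq x <- e | x \in Kv r]>>)%VS.
  by move=> r; have := aA (Some r); rewrite /= ef capvf.
have aB' : forall r, (B r <= <<[seq x <- e | x \in B r]>>)%VS.
  by move=> r; have := aB (Some r); rewrite /= ef capvf.
pose n := size e.
pose alive (j : 'I_n) (r : R) : bool := [&& 0 <= r, e`_j \in Kv r & e`_j \notin B r].
pose I0 := {j : 'I_n | exists r : R, alive j r}.
exists I0, (fun i : I0 => [set r : R | alive (proj1_sig i) r]),
  (fun (i : I0) (_ : R) => e`_(proj1_sig i)).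
split.
- split.
  + move=> [j [q0 Hq0]]; split; first by exists q0.
      by move=> r /= /and3P [].
    move=> r s t /= /and3P [r0 Kr _] /and3P [_ _ nBt] rs st.
    rewrite /alive (le_trans r0 rs) (subvP (Kmono _ _ rs)) //=.
    by apply: contra nBt; apply: (subvP (Bmono _ _ st)).
  + by move=> i r /= /and3P [].
- by move=> i r s _ _ _; rewrite subrr mem0v.
- move=> i r s /= /and3P [r0 Kr _] nJ rs.
  apply: contrapT => nB; apply: nJ; apply/and3P; split => //.
    exact: le_trans r0 rs.
  + exact: (subvP (Kmono _ _ rs)).
  + by apply/negP.
- move=> r r0 [//|m] f fi fJ fB.
  exfalso.
  pose j0 := sval (f ord0).
  have : coord (in_tuple e) j0 (\sum_k e`_(sval (f k))) = 0.
    apply: (coord_filter (P := fun x => x \in B r)) fe (subvP (aB' r) _ fB) _.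
    by have := fJ ord0; rewrite /= => /and3P [].
  rewrite linear_sum (bigD1 ord0) //= big1.
    by rewrite (@coord_free _ _ _ (in_tuple e) j0 j0 fe) eqxx addr0 => /eqP; rewrite oner_eq0.
  move=> k nk; rewrite (@coord_free _ _ _ (in_tuple e) _ j0 fe).
  case: eqP => // /sval_inj /fi ek; by rewrite ek eqxx in nk.
- move=> r r0 w Kw.
  have we : w \in <<in_tuple e>>%VS by rewrite ef memvf.
  have ew := coord_span we.
  pose Q := [pred j : 'I_n | (coord (in_tuple e) j w != 0) && (e`_j \notin B r)].
  have QK : forall j, Q j -> e`_j \in Kv r.
    move=> j /andP [cj _]; apply: contraR cj => nK; apply/eqP.
    by apply: (coord_filter (P := fun x => x \in Kv r)) fe (subvP (aK r) _ Kw) nK.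
  have pf : forall k : 'I_#|Q|, exists r, alive (enum_val k) r.
    move=> k; exists r; have /andP [cj nB] := enum_valP k.
    by rewrite /alive r0 (QK _ (enum_valP k)) nB.
  exists #|Q|, (fun k => exist _ (enum_val k) (pf k)); split.
    move=> k /=; have /andP [cj nB] := enum_valP k.
    by rewrite /alive r0 (QK _ (enum_valP k)) nB.
  rewrite [X in X - _]ew /= -(big_enum_val (A := Q) (fun j => e`_j)) /=.
  rewrite [X in _ - X]big_mkcond /= -sumrB; apply: memv_suml => j _.
  case: (F2_cases (coord (in_tuple e) j w)) => cj.
    by rewrite !inE cj eqxx /= scale0r subr0 mem0v.
  rewrite !inE cj oner_eq0 /= scale1r.
  by case: (boolP (e`_j \in B r)) => ejB /=; [rewrite subr0 | rewrite subrr mem0v].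
Qed.

Lemma ch_coord (T : finType) (x : T) j : (ch x) 0 j = (enum_rank x == j)%:R.
Proof. by rewrite /ch mxE eqxx /= eq_sym. Qed.

Lemma push_is_linear (T U : finType) (g : T -> U) : linear (push g).
Proof.
move=> a u w; rewrite /push scaler_sumr -big_split; apply: eq_bigr => x _.
by rewrite !mxE scalerDl scalerA.
Qed.

HB.instance Definition _ (T U : finType) (g : T -> U) :=
  GRing.isLinear.Build 'F_2 (chain T) (chain U) _ (push g) (push_is_linear g).

Lemma push_ch (T U : finType) (g : T -> U) x : push g (ch x) = ch (g x).
Proof.
rewrite /push (bigD1 x) // big1 => [|y nyx].
  by rewrite /= addr0 ch_coord eqxx scale1r.
by rewrite ch_coord (inj_eq enum_rank_inj) eq_sym (negbTE nyx) scale0r.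
Qed.

Lemma chain_expand (T : finType) (v : chain T) : v = \sum_x v 0 (enum_rank x) *: ch x.
Proof.
apply/matrixP => i j; rewrite (ord1 i) summxE (bigD1 (enum_val j)) //= big1.
  by rewrite mxE ch_coord enum_valK eqxx mulr1 addr0.
move=> y nyj; rewrite mxE ch_coord.
have -> : (enum_rank y == j) = false.
  by apply/negbTE; apply: contra nyj => /eqP <-; rewrite enum_rankK.
by rewrite mulr0.
Qed.

Lemma push_expand (T U : finType) (g : T -> U) (v : chain T) :
  push g v = \sum_x v 0 (enum_rank x) *: ch (g x).
Proof. by []. Qed.

Lemma push_comp (T U W : finType) (g : U -> W) (h : T -> U) v :
  push g (push h v) = push (g \o h) v.
Proof.
rewrite [push h v]push_expand linear_sum; apply: eq_bigr => x _.
by rewrite linearZ /= push_ch.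
Qed.

Lemma push_id (T : finType) (v : chain T) : push id v = v.
Proof. by rewrite [RHS]chain_expand. Qed.

Lemma push_coord (T U : finType) (g : T -> U) (gi : injective g) v x :
  (push g v) 0 (enum_rank (g x)) = v 0 (enum_rank x).
Proof.
rewrite /push summxE (bigD1 x) //= big1.
  by rewrite mxE ch_coord eqxx mulr1 addr0.
move=> y nyx; rewrite mxE ch_coord (inj_eq enum_rank_inj) (inj_eq gi).
by rewrite (negbTE nyx) mulr0.
Qed.

Lemma push_inj (T U : finType) (g : T -> U) : injective g -> injective (push g).
Proof.
move=> gi v w evw; apply/matrixP => i j; rewrite (ord1 i).
by rewrite -(enum_valK j) -!(push_coord gi) evw.
Qed.

Lemma fin_gap (R : realType) (l : seq R) r :
  exists2 eta, 0 < eta & forall t, t \in l -> r < t -> r + eta <= t.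
Proof.
elim: l => [|t l [eta eta0 IH]]; first by exists 1.
case: (ltP r t) => rt.
  exists (Num.min eta (t - r)); first by rewrite lt_min eta0 subr_gt0 rt.
  move=> t'; rewrite inE => /orP [/eqP ->|t'l] rt'.
    by rewrite -lerBrDl ge_min lexx orbT.
  by apply: le_trans (IH _ t'l rt'); rewrite lerD2l ge_min lexx.
exists eta => // t'; rewrite inE => /orP [/eqP ->|t'l] rt'; first by rewrite ltNge rt in rt'.
exact: IH.
Qed.

Section Bdry.
Variables (R : realType) (T : finType) (d : T -> T -> R).

Lemma bdry_edge r x y : d x y <= r -> ch x + ch y \in bdry d r.
Proof.
move=> h; apply: memv_span; apply/mapP; exists (x, y) => //.
by rewrite mem_enum inE /= h.
Qed.

Lemma bdry_sub r (U : {vspace chain T}) :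
  (forall x y, d x y <= r -> ch x + ch y \in U) -> (bdry d r <= U)%VS.
Proof.
move=> H; apply/span_subvP => w /mapP [[x y]]; rewrite mem_enum inE /= => h ->.
exact: H.
Qed.

Lemma bdry_mono r s : r <= s -> (bdry d r <= bdry d s)%VS.
Proof. by move=> rs; apply: bdry_sub => x y h; apply: bdry_edge; apply: le_trans h rs. Qed.

Lemma bdry_zero r : (forall x y, d x y <= r -> x = y) -> bdry d r = 0%VS.
Proof.
move=> H; apply/eqP; rewrite -subv0; apply: bdry_sub => x y /H ->.
by rewrite ch_addxx mem0v.
Qed.

Lemma bdry_right r : exists2 eta, 0 < eta &
  forall s, r <= s -> s < r + eta -> (bdry d s <= bdry d r)%VS.
Proof.
have [eta eta0 H] := fin_gap [seq d p.1 p.2 | p <- enum [pred p : T * T | true]] r.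
exists eta => // s rs sl; apply: bdry_sub => x y h; apply: bdry_edge.
rewrite leNgt; apply/negP => rlt.
have := H (d x y) _ rlt.
have -> : d x y \in [seq d p.1 p.2 | p <- enum [pred p : T * T | true]].
  by apply/mapP; exists (x, y); rewrite ?mem_enum.
move=> /(_ isT) h2; have := le_lt_trans (le_trans h2 h) sl.
by rewrite ltxx.
Qed.

Lemma bdry_push (U : finType) (g : T -> U) r (V : {vspace chain U}) w :
  (forall x y, d x y <= r -> push g (ch x + ch y) \in V) ->
  w \in bdry d r -> push g w \in V.
Proof.
move=> H wB.
have : (bdry d r <= (linfun (push g) @^-1: V))%VS.
  by apply: bdry_sub => x y h; rewrite -memv_preim lfunE /=; apply: H.
by move/subvP/(_ _ wB); rewrite -memv_preim lfunE.
Qed.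
End Bdry.

Lemma spanS_mem (T : finType) (P : chain T -> Prop) w :
  P 0 -> (forall x y, P x -> P y -> P (x + y)) -> (w \in spanS P <-> P w).
Proof.
move=> P0 PD; split => [wS|Pw]; last first.
  by apply: memv_span; rewrite mem_filter mem_enum andbT; apply/asboolP.
set l := [seq w <- enum (chain T) | `[< P w >] ] in wS.
rewrite (coord_span (X := in_tuple l) wS).
apply: (big_ind P) => // i _.
have : l`_i \in l by apply: mem_nth; exact: ltn_ord.
rewrite mem_filter => /andP [/asboolP Pi _].
by case: (F2_cases (coord (in_tuple l) i w)) => ->; [rewrite scale0r | rewrite scale1r].
Qed.

Section Concrete.
Variables (R : realType) (TZ TZ' : finType) (dZ : TZ -> TZ -> R) (hZ : is_metric dZ).
Variables (X : {set TZ}) (X' : {set TZ'}) (aZ : TZ -> TZ') (aZ' : TZ' -> TZ).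
Hypothesis haX : forall x, x \in X -> aZ x \in X'.
Variables (delta : R) (hdelta : 0 < delta).

Local Notation Y := (Ytype X X' aZ aZ').
Local Notation pi := (piY X X' aZ aZ').
Local Notation dY := (dYdelta X X' aZ aZ' dZ delta).
Local Notation dX := (dsub dZ X).
Local Notation K := (ker_fdelta dZ X X' aZ aZ').
Local Notation B := (bdry dY).

Let dZ_ge0 x y : 0 <= dZ x y. Proof. by case: hZ. Qed.
Let dZ_eq0 x y : dZ x y = 0 <-> x = y. Proof. by case: hZ. Qed.
Let dZxx x : dZ x x = 0. Proof. exact/dZ_eq0. Qed.

Lemma s_in (x : pts X) : Ypred X X' aZ aZ' (val x, aZ (val x)).
Proof. by rewrite /Ypred /= (valP x) haX ?(valP x) ?eqxx. Qed.

Definition sY (x : pts X) : Y := exist _ (val x, aZ (val x)) (s_in x).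

Lemma pi_s x : pi (sY x) = x.
Proof. exact: val_inj. Qed.

Lemma push_pi_s (v : chain (pts X)) : push pi (push sY v) = v.
Proof.
rewrite push_comp -[RHS]push_id; congr push; apply: funext => x; exact: pi_s.
Qed.

Lemma dY_le p q : dY p q <= delta + dZ (val p).1 (val q).1.
Proof.
rewrite /dYdelta; case: eqP => // _.
by rewrite addr_ge0 // ltW.
Qed.

Lemma dY_ge p q : p != q -> delta <= dY p q.
Proof. by rewrite /dYdelta => /negbTE ->; rewrite lerDl. Qed.

Lemma w_sec w : w - push sY (push pi w) \in B delta.
Proof.
rewrite push_comp {1}[w]chain_expand /push -sumrB; apply: memv_suml => p _.
rewrite -scalerBr; apply: memvZ; rewrite ch_subE; apply: bdry_edge.
by apply: le_trans (dY_le _ _) _; rewrite /= dZxx addr0.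
Qed.

Lemma Bsmall r : r < delta -> B r = 0%VS.
Proof.
move=> rd; apply: bdry_zero => p q h; apply/eqP; apply: contraT => npq.
by have := le_lt_trans (le_trans (dY_ge npq) h) rd; rewrite ltxx.
Qed.

Lemma Bchar a w : 0 <= a -> (w \in B (a + delta) <-> push pi w \in bdry dX a).
Proof.
move=> a0; split => wB.
  apply: (bdry_push _ wB) => p q h; rewrite linearD /= !push_ch.
  case: (eqVneq p q) => [->|npq]; first by rewrite ch_addxx mem0v.
  apply: bdry_edge; move: h; rewrite /dYdelta (negbTE npq) /dsub /=.
  by rewrite addrC lerD2r.
have -> : w = (w - push sY (push pi w)) + push sY (push pi w) by rewrite subrK.
apply: memvD.
  by apply: (subvP (bdry_mono _ _)) (w_sec w); rewrite lerDr.
apply: (bdry_push _ wB) => x y h; rewrite linearD /= !push_ch; apply: bdry_edge.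
by apply: le_trans (dY_le _ _) _; rewrite addrC lerD2r.
Qed.

Lemma push_val_bdry a v : v \in bdry dX a -> push val v \in bdry dZ a.
Proof.
move=> vB; apply: (bdry_push _ vB) => x y h; rewrite linearD /= !push_ch.
exact: bdry_edge.
Qed.

Lemma bdryZ0 : bdry dZ 0 = 0%VS.
Proof. by apply: bdry_zero => x y h; apply/dZ_eq0/eqP; rewrite eq_le h dZ_ge0. Qed.

Lemma bdryX0 : bdry dX 0 = 0%VS.
Proof.
apply: bdry_zero => x y h; apply: val_inj; apply/dZ_eq0/eqP.
by rewrite eq_le h dZ_ge0.
Qed.

Lemma K_mono r s w : r <= s -> K r w -> K s w.
Proof. by move=> rs; apply: (subvP (bdry_mono _ rs)). Qed.

Lemma K_lin r : K r 0 /\ forall x y, K r x -> K r y -> K r (x + y).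
Proof.
rewrite /ker_fdelta; split; first by rewrite !linear0 mem0v.
by move=> x y Kx Ky; rewrite !linearD; apply: memvD.
Qed.

Lemma HBK r x : 0 <= r -> x \in B r -> K r x.
Proof.
move=> r0 xB; case: (ltP r delta) => rd.
  by move: xB; rewrite Bsmall // memv0 => /eqP ->; case: (K_lin r).
have e : r = (r - delta) + delta by rewrite subrK.
move: xB; rewrite e => /Bchar; rewrite subr_ge0 => /(_ rd) /push_val_bdry.
by apply: (subvP (bdry_mono _ _)); rewrite -e gerDl oppr_le0 ltW.
Qed.

Lemma BK a x : 0 <= a -> x \in B (a + delta) -> K a x.
Proof. by move=> a0 /(Bchar _ a0) /push_val_bdry. Qed.

Lemma K0_pi x : K 0 x <-> push pi x = 0.
Proof.
rewrite /ker_fdelta bdryZ0 memv0; split => [/eqP|->]; last by rewrite linear0.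
by rewrite -(linear0 (push (val : pts X -> TZ))) => /push_inj -> //; apply: val_inj.
Qed.

Lemma K0B x : K 0 x -> x \in B delta.
Proof. by move/K0_pi => e; have := w_sec x; rewrite e linear0 subr0. Qed.


Lemma Bbig : exists D, forall r, D <= r -> forall x, K r x -> x \in B r.
Proof.
exists (delta + \sum_(p : TZ * TZ) dZ p.1 p.2) => r Dr x Kx.
have dle : forall u v, dZ u v <= \sum_(p : TZ * TZ) dZ p.1 p.2.
  move=> u v; rewrite (bigD1 (u, v)) //= lerDl sumr_ge0 // => p _.
have wt0 : push (fun _ : Y => tt) x = 0.
  have H : forall u v, dZ u v <= r -> push (fun _ : TZ => tt) (ch u + ch v) \in (0%VS : {vspace chain unit}).
    by move=> u v _; rewrite linearD /= !push_ch ch_addxx mem0v.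
  have := bdry_push H Kx; rewrite !push_comp memv0 => /eqP.
  by [].
case: (pickP (fun _ : Y => true)) => [p0 _|none]; last first.
  by rewrite [x]chain_expand big1 ?mem0v // => p; have := none p.
have sx : \sum_p x 0 (enum_rank p) = 0.
  move: wt0; rewrite /push => /matrixP /(_ 0 (enum_rank tt)); rewrite summxE mxE => e.
  by apply: (etrans _ e); apply: eq_bigr => p _; rewrite mxE ch_coord eqxx mulr1.
have -> : x = \sum_p x 0 (enum_rank p) *: (ch p + ch p0).
  rewrite {1}[x]chain_expand; under [RHS]eq_bigr do rewrite scalerDr.
  by rewrite big_split /= -scaler_suml sx scale0r addr0.
apply: memv_suml => p _; apply: memvZ; apply: bdry_edge.
apply: le_trans (dY_le _ _) _; apply: le_trans Dr; rewrite lerD2l; exact: dle.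
Qed.

Lemma Kright r : 0 <= r -> exists2 eta, 0 < eta &
  forall s, r <= s -> s < r + eta -> forall x, K s x -> K r x.
Proof.
move=> _; have [eta eta0 H] := bdry_right dZ r.
by exists eta => // s rs sl x; apply: (subvP (H _ rs sl)).
Qed.

Lemma Bright r : 0 <= r -> exists2 eta, 0 < eta &
  forall s, r <= s -> s < r + eta -> (B s <= B r)%VS.
Proof. by move=> _; apply: bdry_right. Qed.

Lemma memA a u : u \in kerp_img dZ X a <-> exists v, v \in bdry dX a /\ u = push val v.
Proof.
rewrite /kerp_img bdryZ0 addv0; apply: spanS_mem.
  by exists 0; rewrite mem0v linear0.
move=> _ _ [v1 [v1B ->]] [v2 [v2B ->]]; exists (v1 + v2).
by rewrite memvD // linearD.
Qed.

Lemma memAm a u : 0 < a -> (u \in kerm_img dZ X a <->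
  exists r, (0 <= r < a) /\ exists v, v \in bdry dX r /\ u = push val v).
Proof.
move=> a0; rewrite /kerm_img bdryZ0 addv0; apply: spanS_mem.
  by exists 0; rewrite lexx a0; split => //; exists 0; rewrite mem0v linear0.
move=> ? ? [r1 [/andP [r10 r1a] [v1 [v1B ->]]]] [r2 [/andP [r20 r2a] [v2 [v2B ->]]]].
exists (Num.max r1 r2); split; first by rewrite le_max r10 gt_max r1a r2a.
exists (v1 + v2); rewrite linearD; split => //; apply: memvD.
  by apply: (subvP (bdry_mono _ _)) v1B; rewrite le_max lexx.
by apply: (subvP (bdry_mono _ _)) v2B; rewrite le_max lexx orbT.
Qed.

Lemma memUm b u : 0 < b -> (u \in kermU dZ b <-> exists r, (0 <= r < b) /\ u \in bdry dZ r).
Proof.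
move=> b0; rewrite /kermU bdryZ0 addv0; apply: spanS_mem.
  by exists 0; rewrite lexx b0 mem0v.
move=> u1 u2 [r1 [/andP [r10 r1b] u1B]] [r2 [/andP [r20 r2b] u2B]].
exists (Num.max r1 r2); split; first by rewrite le_max r10 gt_max r1b r2b.
apply: memvD.
  by apply: (subvP (bdry_mono _ _)) u1B; rewrite le_max lexx.
by apply: (subvP (bdry_mono _ _)) u2B; rewrite le_max lexx orbT.
Qed.

Definition valX : pts X -> TZ := fun x => val x.
Definition phi := (linfun (push valX) \o linfun (push pi))%VF.

Lemma phiE w : phi w = push val (push pi w).
Proof. by rewrite comp_lfunE !lfunE. Qed.

Lemma limg_phi u : (exists v : chain (pts X), u = push val v) -> u \in limg phi.
Proof.
move=> [v ->]; rewrite -[v in push _ v]push_pi_s -phiE.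
by apply: memv_img; apply: memvf.
Qed.

Lemma preim_dim W : (W <= limg phi)%VS -> \dim (phi @^-1: W) = (\dim W + \dim (lker phi))%N.
Proof.
move=> Wl; have := limg_ker_dim phi (phi @^-1: W); rewrite lpreimK //.
have -> : (phi @^-1: W :&: lker phi)%VS = lker phi.
  apply/capv_idPr; apply/subvP => x; rewrite memv_ker -memv_preim => /eqP ->.
  exact: mem0v.
by move=> <-; rewrite addnC.
Qed.

Lemma preim_add W1 W2 : (W1 <= limg phi)%VS -> (W2 <= limg phi)%VS ->
  (phi @^-1: W1 + phi @^-1: W2)%VS = (phi @^-1: (W1 + W2))%VS.
Proof.
move=> W1l W2l; apply/eqP; rewrite eqEsubv; apply/andP; split.
  rewrite subv_add; apply/andP; split; apply/subvP => x; rewrite -!memv_preim => h.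
    by apply: (subvP (addvSl _ _)).
  by apply: (subvP (addvSr _ _)).
apply/subvP => x; rewrite -memv_preim => /memv_addP [u1 u1W [u2 u2W e]].
have /memv_imgP [y1 _ e1] := subvP W1l _ u1W.
have /memv_imgP [y2 _ e2] := subvP W2l _ u2W.
have -> : x = ((x - (y1 + y2)) + y1) + y2 by rewrite -addrA subrK.
apply: memvD; last by apply: (subvP (addvSr _ _)); rewrite -memv_preim -e2.
apply: (subvP (addvSl _ _)); apply: memvD; last by rewrite -memv_preim -e1.
rewrite -memv_preim linearB linearD /= e -e1 -e2 subrr; exact: mem0v.
Qed.

End Concrete.

Unset Implicit Arguments.

Theorem lemma6p6 (R : realType)
  (TZ TZ' : finType) (dZ : TZ -> TZ -> R) (dZ' : TZ' -> TZ' -> R)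
  (hZ : is_metric dZ) (hZ' : is_metric dZ')
  (X : {set TZ}) (X' : {set TZ'}) (eps : R)
  (heps : eps = dGH_pair dZ dZ' [set x | x \in X] [set x' | x' \in X'])
  (M : Type) (dM : M -> M -> R) (hM : is_metric dM)
  (gZ : TZ -> M) (gZ' : TZ' -> M)
  (hgZ : isometric dZ dM gZ) (hgZ' : isometric dZ' dM gZ')
  (hHX : hausdorff dM (gZ @` [set x | x \in X]) (gZ' @` [set x' | x' \in X']) <= eps)
  (hHZ : hausdorff dM (gZ @` setT) (gZ' @` setT) <= eps)
  (aZ : TZ -> TZ') (aZ' : TZ' -> TZ)
  (haX : forall x, x \in X -> aZ x \in X')
  (haX' : forall x', x' \in X' -> aZ' x' \in X)
  (hmv : forall z, dM (gZ z) (gZ' (aZ z)) <= eps)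
  (hmv' : forall z', dM (gZ (aZ' z')) (gZ' z') <= eps)
  (delta : R) (hdelta : 0 < delta) :
  let K := ker_fdelta dZ X X' aZ aZ' in
  let B := bdry (dYdelta X X' aZ aZ' dZ delta) in
  (exists (I : Type) (J : I -> set R) (v : I -> R -> chain (Ytype X X' aZ aZ')),
      interval_decomp K B J v) /\
  (forall (I : Type) (J : I -> set R) (v : I -> R -> chain (Ytype X X' aZ aZ')),
    interval_decomp K B J v ->
    [/\ (forall i, (exists a b, 0 < b <= a /\ J i = [set r | b <= r < a + delta])
                   \/ J i = [set r | 0 <= r < delta]),
        (forall a b, 0 < b <= a ->
           has_card (fun i => J i = [set r | b <= r < a + delta]) (Mf0 dZ X a b))
      & has_card (fun i => J i = [set r | 0 <= r < delta]) (dimker_h0 dZ X X' aZ aZ' delta)]).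
Proof.
move=> K B.
have Bmono : forall r s, r <= s -> (B r <= B s)%VS by move=> r s; apply: bdry_mono.
have K0 : forall r, K r 0 := fun r => (K_lin dZ X X' aZ aZ' r).1.
have KD : forall r x y, K r x -> K r y -> K r (x + y) := fun r => (K_lin dZ X X' aZ aZ' r).2.
split.
  pose Kv := fun r => spanS (K r).
  have KvE : forall r w, w \in Kv r <-> K r w.
    by move=> r w; apply: spanS_mem; [apply: K0 | apply: KD].
  have Kvmono : forall r s, r <= s -> (Kv r <= Kv s)%VS.
    move=> r s rs; apply/subvP => w /KvE Kw; apply/KvE.
    exact: (subvP (bdry_mono _ rs)).
  have [I [J [v hD]]] := exists_decomp Kvmono Bmono.
  have eK : (fun r w => is_true (w \in Kv r)) = K.
    apply: funext => r; apply: funext => w; apply: propext; exact: KvE.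
  by exists I, J, v; rewrite -eK.
move=> I J v hD; split.
- apply: (bar_shape hD Bmono hdelta).
  + exact: Kright.
  + exact: Bright.
  + exact: (Bbig hZ X X' aZ aZ' hdelta).
  + by move=> r x rd; rewrite /B (Bsmall hZ X X' aZ aZ' rd) memv0 => /eqP.
  + by move=> a x a0; apply: (BK hZ haX hdelta a0).
  + by move=> x; apply: (K0B hZ haX hdelta).
- move=> a b /andP [b0 ba].
  have a0 : 0 < a := lt_le_trans b0 ba.
  pose ph := phi X X' aZ aZ'.
  have phE : forall w, ph w = push val (push (piY X X' aZ aZ') w) by move=> w; apply: phiE.
  have valI : injective (push (val : pts X -> TZ)) by apply: push_inj; apply: val_inj.
  set PZ := (kerp_img dZ X a :&: kerpU dZ b)%VS.
  set WaZ := (kerm_img dZ X a :&: kerpU dZ b)%VS.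
  set WbZ := (kerp_img dZ X a :&: kermU dZ b)%VS.
  have Al : (kerp_img dZ X a <= limg ph)%VS.
    apply/subvP => u /(memA hZ) [v' [_ ->]]; apply: (limg_phi aZ' haX); by exists v'.
  have Aml : (kerm_img dZ X a <= limg ph)%VS.
    apply/subvP => u /(memAm hZ X u a0) [r [_ [v' [_ ->]]]]; apply: (limg_phi aZ' haX); by exists v'.
  have PZl : (PZ <= limg ph)%VS by apply: subv_trans Al; apply: capvSl.
  have WaZl : (WaZ <= limg ph)%VS by apply: subv_trans Aml; apply: capvSl.
  have WbZl : (WbZ <= limg ph)%VS by apply: subv_trans Al; apply: capvSl.
  have c0 : b < a + delta by apply: le_lt_trans ba _; rewrite ltrDl.
  have := count_bars hD Bmono (P := ph @^-1: PZ) (Wa := ph @^-1: WaZ) (Wb := ph @^-1: WbZ)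
    (ltW b0) c0.
  have WZl : (WaZ + WbZ <= limg ph)%VS by rewrite subv_add WaZl WbZl.
  rewrite preim_add // (preim_dim PZl) (preim_dim WZl) subnDr /Mf0 -/PZ -/WaZ -/WbZ.
  apply.
  + move=> x; rewrite -memv_preim memv_cap phE; split.
      move=> /andP [/(memA hZ) [v' [v'B e]] Kx]; split => //.
      rewrite /B; apply/(Bchar hZ haX hdelta x (ltW a0)); by rewrite (valI _ _ e).
    move=> [Kx xB]; apply/andP; split; last exact: Kx.
    apply/(memA hZ); exists (push (piY X X' aZ aZ') x); split => //.
    exact/(Bchar hZ haX hdelta x (ltW a0)).
  + apply/subvP => x; rewrite -!memv_preim !memv_cap => /andP [hAm ->]; rewrite andbT.
    move: hAm => /(memAm hZ X _ a0) [r [/andP [r0 ra] [v' [v'B e]]]].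
    apply/(memA hZ); exists v'; split => //; exact: (subvP (bdry_mono _ (ltW ra))).
  + apply/subvP => x; rewrite -!memv_preim !memv_cap => /andP [-> /(memUm hZ _ b0)].
    move=> [r [/andP [r0 rb] h]] /=; exact: (subvP (bdry_mono _ (ltW rb))).
  + move=> x; rewrite -memv_preim memv_cap phE.
    move=> /andP [/(memAm hZ X _ a0) [r [/andP [r0 ra] [v' [v'B e]]]] _].
    exists (r + delta); first by rewrite ltrD2r.
    rewrite /B; apply/(Bchar hZ haX hdelta x r0); by rewrite (valI _ _ e).
  + move=> s x sc Kx xB; rewrite -memv_preim memv_cap phE; apply/andP; split; last exact: Kx.
    apply/(memAm hZ X _ a0).
    case: (ltP s delta) => sd.
      move: xB; rewrite /B (Bsmall hZ X X' aZ aZ' sd) memv0 => /eqP ->.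
      exists 0; rewrite lexx a0; split => //; exists 0; by rewrite mem0v !linear0.
    have sd0 : 0 <= s - delta by rewrite subr_ge0.
    exists (s - delta); split; first by rewrite sd0 ltrBlDr.
    exists (push (piY X X' aZ aZ') x); split => //.
    by apply/(Bchar hZ haX hdelta x sd0); rewrite subrK.
  + move=> x; rewrite -memv_preim memv_cap phE.
    move=> /andP [_ /(memUm hZ _ b0) [r [/andP [r0 rb] h]]]; right; exists r; split => //.
  + move=> r x r0 rb Kx xB; rewrite -memv_preim memv_cap phE; apply/andP; split.
      apply/(memA hZ); exists (push (piY X X' aZ aZ') x); split => //.
      exact/(Bchar hZ haX hdelta x (ltW a0)).
    apply/(memUm hZ _ b0); exists r; split => //; by rewrite r0 rb.
  + by move=> r x r0; apply: (HBK hZ haX hdelta r0).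
- pose P0 := spanS (fun w : chain (Ytype X X' aZ aZ') =>
              push (piY X X' aZ aZ') w \in bdry (dsub dZ X) 0).
  have P0E : forall x, x \in P0 <-> push (piY X X' aZ aZ') x = 0.
    move=> x; apply: iff_trans (spanS_mem x _ _) _.
    + by rewrite linear0 mem0v.
    + by move=> y z hy hz; rewrite linearD memvD.
    by rewrite (bdryX0 hZ) memv0; split => [/eqP|->].
  have := count_bars hD Bmono (P := P0) (Wa := 0%VS) (Wb := 0%VS) (lexx 0) hdelta.
  rewrite addv0 dimv0 subn0 /dimker_h0 -/P0 (Bsmall hZ X X' aZ aZ' hdelta) dimv0 subn0.
  apply.
  + move=> x; rewrite P0E; split => [e|[Kx _]].
      have Kx : K 0 x by apply/(K0_pi hZ).
      by split => //; apply: (K0B hZ haX hdelta).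
    exact/(K0_pi hZ).
  + exact: sub0v.
  + exact: sub0v.
  + by move=> x; rewrite memv0 => /eqP ->; exists 0 => //; apply: mem0v.
  + by move=> s x sd _; rewrite /B (Bsmall hZ X X' aZ aZ' sd).
  + by move=> x; rewrite memv0 => /eqP ->; left.
  + by move=> r x r0; rewrite ltNge r0.
  + by move=> r x r0; apply: (HBK hZ haX hdelta r0).
Qed.
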